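(* Let $\alpha=(\alpha_1,\dots,\alpha_k)$ be a composition of $n$ with $k$ parts. Fix positive integers $i_1<\dots<i_k$ and consider all words that are rearrangements of the multiset containing $i_j$ with multiplicity $\alpha_j$ for each $j$ (words with this fixed content, of packed content $\alpha$). Then the number of $\#$-Sylvester equivalence classes of these words is \[\det\left[\binom{j+\sum_{\ell=1}^i\alpha_\ell}{j-(i-1)}\right]_{1\le i,j\le k-1}\] (the empty determinant, for $k=1$, being $1$).
   Context: Words are finite sequences of positive integers; the packed content of a word is the composition listing the multiplicities of its distinct letters in increasing order of the letters. Two words $w_1,w_2$ are $\#$-Sylvester adjacent if there are words $u,v,w$ and letters $a<b\le c$ with $w_1=u\,b\,v\,a\,c\,w$ and $w_2=u\,b\,v\,c\,a\,w$. $\#$-Sylvester equivalence is the equivalence relation generated by $\#$-Sylvester adjacency. Binomial coefficients $\binom{N}{r}$ with $r<0$ are $0$. *)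

(* Defs.v *)
From mathcomp Require Import all_boot all_order all_algebra.
From Stdlib Require Import Relations.
Set Implicit Arguments. Unset Strict Implicit. Unset Printing Implicit Defensive.
Import GRing.Theory Num.Theory.

Definition sylv_adj (w1 w2 : seq nat) : Prop :=
  exists (u v w : seq nat) (a b c : nat),
    [/\ (a < b <= c)%N,
        w1 = u ++ b :: v ++ a :: c :: w &
        w2 = u ++ b :: v ++ c :: a :: w].

Definition sylv_equiv : seq nat -> seq nat -> Prop :=
  clos_refl_sym_trans (seq nat) sylv_adj.

Definition num_classes (W : seq nat -> Prop) (N : nat) : Prop :=
  exists reps : seq (seq nat),
    [/\ size reps = N,
        (forall r, r \in reps -> W r),
        (forall i j, (i < size reps)%N -> (j < size reps)%N -> i <> j ->
           ~ sylv_equiv (nth [::] reps i) (nth [::] reps j)) &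
        (forall w, W w -> exists2 r, r \in reps & sylv_equiv w r)].

(* The word i_1^{alpha_1} ... i_k^{alpha_k} (one word with the given content). *)
Definition content_word (idx alpha : seq nat) : seq nat :=
  flatten [seq nseq p.2 p.1 | p <- zip idx alpha].

(* binomial with negative lower index = 0 *)
Definition binz (N : nat) (r : int) : int :=
  match r with Posz m => ('C(N, m))%:Z | Negz _ => 0%R end.

(* The (k-1)x(k-1) matrix, entry (i,j) (1-indexed) =
   binom (j + sum_{l<=i} alpha_l) (j - (i-1)).  With 0-indexed i', j':
   i = i'+1, j = j'+1. *)
Definition cor_matrix (alpha : seq nat) : 'M[int]_((size alpha).-1) :=
  \matrix_(i < (size alpha).-1, j < (size alpha).-1)
    binz (j.+1 + \sum_(l < i.+1) nth 0%N alpha l)%N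
         ((j.+1)%:Z - (i.+1)%:Z + 1)%R.

(* Main.v *)
Require Import Defs.
From mathcomp Require Import all_boot all_order all_algebra ring zify.
From Stdlib Require Import Relations.
Import GRing.Theory Num.Theory.
Set Implicit Arguments. Unset Strict Implicit. Unset Printing Implicit Defensive.

Open Scope ring_scope.

Fixpoint cntw (lo : nat) (S : seq nat) (g : nat -> int) : int :=
  match S with
  | [::] => g lo
  | s :: S' => \sum_(lo <= y < s.+1) cntw y S' g
  end.
Definition cnt lo S := cntw lo S (fun _ => 1).

Lemma cntw_rcons lo S s g :
  cntw lo (rcons S s) g = cntw lo S (fun a => \sum_(a <= y < s.+1) g y).
Proof.
elim: S lo => [|x S IH] lo //=.
by apply: eq_bigr => y _; rewrite IH.
Qed.

Lemma cntw_ext lo S g1 g2 :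
  (forall y, (y <= last lo S)%N -> g1 y = g2 y) -> cntw lo S g1 = cntw lo S g2.
Proof.
elim: S lo => [|x S IH] lo H /=; first by apply: H.
apply: eq_big_nat => y /andP[_ hy]; apply: IH => z hz; apply: H => /=.
case: S hz => [|t S] /= hz; last by [].
by apply: leq_trans hz _.
Qed.

Lemma cntw_lin lo S (a : int) g1 g2 :
  cntw lo S (fun y => a * g1 y - g2 y) = a * cntw lo S g1 - cntw lo S g2.
Proof.
elim: S lo => [|x S IH] lo //=.
under eq_bigr do rewrite IH.
by rewrite sumrB mulr_sumr.
Qed.

Lemma PoszS I (r : seq I) (P : pred I) (F : I -> nat) :
  Posz (\sum_(i <- r | P i) F i)%N = \sum_(i <- r | P i) Posz (F i).
Proof. by apply: (big_morph Posz PoszD). Qed.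

Lemma hockey a n d l : (a <= n)%N ->
  (\sum_(a <= y < n) 'C(y + d, l) + 'C(a + d, l.+1) = 'C(n + d, l.+1))%N.
Proof.
elim: n => [|n IH] han.
  by move: han; rewrite leqn0 => /eqP ->; rewrite big_geq.
case: (ltngtP a n.+1) han => // [ltan|->] _; last by rewrite big_geq.
rewrite big_nat_recr //= -addnA [(_ + 'C(a + d, _))%N]addnC addnA IH //.
Qed.

Lemma hockeyZ a s d l : (a <= s.+1)%N ->
  \sum_(a <= y < s.+1) Posz 'C(y + d, l) =
  Posz 'C(s.+1 + d, l.+1) - Posz 'C(a + d, l.+1).
Proof.
move=> h; rewrite -(hockey d l h) PoszD PoszS.
by rewrite addrK.
Qed.

Open Scope ring_scope.

Lemma last_take_le (S : seq nat) j : sorted leq S -> (j < size S)%N ->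
  (last 0 (take j S) <= nth 0%N S j)%N.
Proof.
move=> sS ltj; case: j ltj => [|j] ltj; first by rewrite take0.
rewrite -nth_last size_take ltj /= nth_take //.
apply: (sorted_leq_nth leq_trans leqnn) => //; rewrite inE //.
by apply: ltn_trans ltj.
Qed.

Lemma ML (S : seq nat) : sorted leq S -> forall j, (j <= size S)%N -> forall d l,
  (-1) ^+ j * cntw 0 (take j S) (fun y => Posz 'C(y + d, l)) =
  Posz 'C(d, l + j) -
  \sum_(i < j) (-1) ^+ i * Posz 'C(nth 0%N S i + d + 1, l + j - i) * cnt 0 (take i S).
Proof.
move=> sS; elim=> [|j IH] hj d l.
  by rewrite big_ord0 subr0 expr0 mul1r take0 /= addn0.
rewrite (take_nth 0 hj) cntw_rcons.
set s := nth 0%N S j.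
rewrite (@cntw_ext _ _ _ (fun a => Posz 'C(s.+1 + d, l.+1) * 1 - Posz 'C(a + d, l.+1))); last first.
  move=> y hy; rewrite mulr1 hockeyZ //.
  by apply: leq_trans (leqnSn _); apply: leq_trans hy (last_take_le sS hj).
rewrite cntw_lin exprS mulrBr mulrA !mulN1r !mulNr opprK.
rewrite IH; last by apply: ltnW.
rewrite big_ord_recr /= addSnnS.
set A := \sum_(i < j) _.
set B := \sum_(i < j) _.
have -> : A = B.
  apply: eq_bigr => i _; congr (_ * Posz 'C(_, _) * _).
  by rewrite addSn addnS.
have e : (l + j.+1 - j = l.+1)%N by rewrite addnS -addSn addnK.
rewrite e /s /cnt addnS addn1 addSn addnS.
ring.
Qed.

Open Scope ring_scope.

Lemma Col (S : seq nat) : sorted leq S -> forall j, (j < size S)%N ->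
  \sum_(i < j.+1) (-1) ^+ i * Posz 'C(nth 0%N S i + j.+1, j.+1 - i) * cnt 0 (take i S)
  = (-1) ^+ j * cnt 0 (take j.+1 S).
Proof.
move=> sS j hj.
have := ML sS hj j 0.
rewrite (@cntw_ext _ _ _ (fun _ => 1)); last by move=> y _; rewrite bin0.
rewrite add0n bin_small // sub0r => E.
have -> : \sum_(i < j.+1) (-1) ^+ i * Posz 'C(nth 0%N S i + j.+1, j.+1 - i) * cnt 0 (take i S)
  = \sum_(i < j.+1) (-1) ^+ i * Posz 'C(nth 0%N S i + j + 1, j.+1 - i) * cnt 0 (take i S).
  by apply: eq_bigr => i _; rewrite addn1 addnS.
rewrite -[LHS]opprK -E exprS mulN1r mulNr opprK //.
Qed.

Lemma sign_sq m : (-1) ^+ m * (-1) ^+ m = 1 :> int.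
Proof.
elim: m => [|m IH]; first by rewrite mulr1.
rewrite exprS; transitivity ((-1) * (-1) * ((-1) ^+ m * (-1) ^+ m) : int); first ring.
by rewrite IH mulr1 mulrNN mulr1.
Qed.

Lemma det_hess m (M : 'M[int]_m.+1) (F : nat -> int) :
  F 0%N = 1 ->
  (forall i j : 'I_m.+1, (j.+1 < i)%N -> M i j = 0) ->
  (forall i j : 'I_m.+1, i = j.+1 :> nat -> M i j = 1) ->
  (forall j : 'I_m.+1, \sum_(i < m.+1) (-1) ^+ i * M i j * F i =
     if j == ord_max then (-1) ^+ m * F m.+1 else 0) ->
  \det M = F m.+1.
Proof.
move=> F0 Mz M1 Mcol.
pose P : 'M[int]_m.+1 := \matrix_(i, j) if i == ord0 then (-1) ^+ j * F j else (i == j)%:R.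
have dP : \det P = 1.
  rewrite -det_tr det_trig; last first.
    apply/forallP => i; apply/forallP => j; apply/implyP => lij.
    rewrite !mxE; case: (j =P ord0) => [ej|_].
      by move: lij; rewrite ej.
    have -> : (j == i) = false by apply/eqP => eji; move: lij; rewrite eji ltnn.
    by [].
  apply: big1 => i _; rewrite !mxE eqxx; case: (i =P ord0) => // ->.
  by rewrite expr0 mul1r F0.
have : \det (P *m M) = \det M by rewrite det_mulmx dP mul1r.
move <-.
rewrite (expand_det_row _ ord0) (bigD1 ord_max) //= big1; last first.
  move=> j /negPf nj; rewrite !mxE.
  have -> : \sum_j0 P ord0 j0 * M j0 j = 0.
    transitivity (\sum_(i < m.+1) (-1) ^+ i * M i j * F i); last by rewrite Mcol nj.
    by apply: eq_bigr => i _; rewrite !mxE eqxx mulrAC.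
  by rewrite mul0r.
rewrite addr0 !mxE.
have -> : \sum_j0 P ord0 j0 * M j0 ord_max = (-1) ^+ m * F m.+1.
  transitivity (\sum_(i < m.+1) (-1) ^+ i * M i ord_max * F i); last by rewrite Mcol eqxx.
  by apply: eq_bigr => i _; rewrite !mxE eqxx mulrAC.
have PMi : forall (i j : 'I_m.+1), i != ord0 -> (P *m M) i j = M i j.
  move=> i j ni; rewrite mxE (bigD1 i) //= big1 => [|k nk].
    by rewrite !mxE (negPf ni) eqxx mul1r addr0.
  by rewrite !mxE (negPf ni) eq_sym (negPf nk) mul0r.
have PMi' : forall (i j : 'I_m.+1), i != ord0 -> \sum_k P i k * M k j = M i j.
  by move=> i j ni; rewrite -PMi // mxE.
have dB : \det (row' ord0 (col' ord_max (P *m M))) = 1.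
  rewrite -det_tr det_trig; last first.
    apply/forallP => a; apply/forallP => b; apply/implyP => lab.
    rewrite !mxE PMi'; last by rewrite -val_eqE [val (lift _ _)]lift0.
    apply/eqP; apply: Mz.
    rewrite /= /bump.
    have -> : (m <= a)%N = false by apply/negbTE; rewrite -ltnNge; exact: (ltn_ord a).
    by rewrite add0n add1n ltnS.
  apply: big1 => i _; rewrite !mxE PMi'; last by rewrite -val_eqE [val (lift _ _)]lift0.
  apply: M1; rewrite /= /bump.
  have -> : (m <= i)%N = false by apply/negbTE; rewrite -ltnNge; exact: (ltn_ord i).
  by rewrite add0n add1n.
rewrite /cofactor dB mulr1 add0n /= mulrC mulrA sign_sq mul1r //.
Qed.

Open Scope nat_scope.

Fixpoint ps (c : nat) (a : seq nat) : seq nat :=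
  match a with
  | [::] => [::]
  | x :: a' => if a' is [::] then [::] else (c + x) :: ps (c + x) a'
  end.

Lemma size_ps c a : size (ps c a) = (size a).-1.
Proof.
elim: a c => [|x [|y a] IH] c //=.
by rewrite IH.
Qed.

Lemma nth_ps c a i : i < (size a).-1 ->
  nth 0 (ps c a) i = c + \sum_(l < i.+1) nth 0 a l.
Proof.
elim: a c i => [|x [|y a] IH] c i //=.
case: i => [|i] hi /=.
  by rewrite big_ord_recl big_ord0 addn0.
by rewrite IH // [in RHS]big_ord_recl addnA.
Qed.

Lemma sorted_ps c a : sorted leq (ps c a).
Proof.
elim: a c => [|x [|y a] IH] c //=.
have := IH (c + x); case: a {IH} => [|z a] //= H.
by rewrite H andbT leq_addr.
Qed.

Open Scope ring_scope.

Lemma binz_neg N (i j : nat) : (j.+1 < i)%N -> binz N ((j.+1)%:Z - (i.+1)%:Z + 1) = 0.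
Proof.
move=> h; have : (j.+1)%:Z - (i.+1)%:Z + 1 < 0 by lia.
by case: (_ - _ + _).
Qed.

Lemma binz_pos N (i j : nat) : (i <= j.+1)%N ->
  binz N ((j.+1)%:Z - (i.+1)%:Z + 1) = Posz 'C(N, j.+1 - i).
Proof.
move=> h; have -> : (j.+1)%:Z - (i.+1)%:Z + 1 = Posz (j.+1 - i)%N by lia.
by [].
Qed.

Lemma det_gen alpha n : n = (size alpha).-1 ->
  \det (\matrix_(i < n, j < n)
    binz (j.+1 + \sum_(l < i.+1) nth 0 alpha l)%N
         ((j.+1)%:Z - (i.+1)%:Z + 1) : 'M[int]_n) = cnt 0 (ps 0 alpha).
Proof.
set S := ps 0 alpha.
have sS : sorted leq S by apply: sorted_ps.
have szS : size S = (size alpha).-1 by rewrite size_ps.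
case: n => [|m] hn.
  rewrite det_mx00.
  by move: szS; rewrite -hn => /size0nil ->.
have hm : size S = m.+1 by rewrite szS.
rewrite -[cnt 0 S](congr1 (fun X => cnt 0 X) (take_size S)) hm.
apply: (@det_hess m _ (fun i => cnt 0 (take i S))).
- by rewrite take0.
- by move=> i j hij; rewrite mxE binz_neg.
- move=> i j hij; rewrite mxE hij binz_pos //.
  by rewrite subnn bin0.
move=> j.
pose G i := (-1) ^+ i * binz (j.+1 + nth 0 S i)%N ((j.+1)%:Z - (i.+1)%:Z + 1) * cnt 0 (take i S).
transitivity (\sum_(i < m.+1) G i).
  apply: eq_bigr => i _; rewrite mxE /G nth_ps ?add0n //.
  by rewrite -hn.
have E : \sum_(0 <= i < m.+1) G i = \sum_(0 <= i < j.+1) G i + \sum_(j.+1 <= i < m.+1) G i.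
  by apply: big_cat_nat => //; apply: ltn_ord.
rewrite -(big_mkord xpredT G) E.
have -> : \sum_(0 <= i < j.+1) G i = (-1) ^+ j * cnt 0 (take j.+1 S).
  have hj : (j < size S)%N by rewrite hm.
  rewrite -(Col sS hj).
  rewrite big_mkord; apply: eq_bigr => i _; rewrite /G binz_pos; last exact: ltnW (ltn_ord i).
  by rewrite [(nth _ _ _ + _)%N]addnC.
case: eqP => [-> | nj].
  by rewrite /= big_geq // addr0.
have ljm : (j < m)%N.
  have := ltn_ord j; rewrite ltnS leq_eqVlt => /orP[/eqP ej|//].
  by case: nj; apply: val_inj.
rewrite big_ltn // big_nat big1 => [|i /andP[hi _]]; last first.
  by rewrite /G binz_neg // mulr0 mul0r.
rewrite addr0 /G binz_pos // subnn bin0 mulr1 exprS.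
ring.
Qed.

Lemma det_cor alpha : \det (cor_matrix alpha) = cnt 0 (ps 0 alpha).
Proof. exact: det_gen. Qed.

Open Scope ring_scope.

Lemma cnt_cons lo s S : cnt lo (s :: S) = \sum_(lo <= y < s.+1) cnt y S.
Proof. by []. Qed.

Lemma cnt_nil lo : cnt lo [::] = 1.
Proof. by []. Qed.

Lemma decomp S : sorted leq S -> forall lo, (lo <= head lo S)%N ->
  cnt lo S = cnt lo.+1 S +
    \sum_(L < size S) cnt lo (take L S) * cnt (nth 0%N S L).+1 (drop L.+1 S).
Proof.
elim: S => [|s S IH] sS lo hlo.
  by rewrite !cnt_nil big_ord0 addr0.
have sS' : sorted leq S by move: sS => /= /path_sorted.
move: hlo => /= hlo; rewrite cnt_cons.
have E : forall y, (y < s.+1)%N -> cnt y S = cnt y.+1 S +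
    \sum_(L < size S) cnt y (take L S) * cnt (nth 0%N S L).+1 (drop L.+1 S).
  move=> y hy; apply: IH => //.
  case: S {sS'} sS => [|t S] //= /andP[hst _].
  by apply: leq_trans hst.
rewrite (eq_big_nat _ _ (fun y hy => E y (proj2 (andP hy)))) /= big_split /=.
rewrite [in RHS]cnt_cons.
have -> : \sum_(lo <= i < s.+1) cnt i.+1 S = \sum_(lo.+1 <= i < s.+1) cnt i S + cnt s.+1 S.
  by rewrite -big_nat_recr //= big_add1.
rewrite big_ord_recl /= cnt_nil mul1r drop0 -!addrA; congr (_ + (_ + _)).
rewrite exchange_big /=; apply: eq_bigr => L _.
by rewrite -big_distrl /= cnt_cons add0n /bump /= add1n.
Qed.

Lemma cnt_shift c S : forall lo, cnt (c + lo) (map (addn c) S) = cnt lo S.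
Proof.
elim: S => [|s S IH] lo //=.
rewrite !cnt_cons -addnS [(c + lo)%N]addnC [(c + s.+1)%N]addnC big_addn addnK.
by apply: eq_bigr => y _; rewrite addnC IH.
Qed.

Open Scope nat_scope.

Lemma ps_mapD c d a : ps (c + d) a = map (addn c) (ps d a).
Proof.
elim: a d => [|x [|y a] IH] d //.
have e1 : ps (c + d) [:: x, y & a] = (c + d + x) :: ps (c + d + x) (y :: a) by [].
have e2 : ps d [:: x, y & a] = (d + x) :: ps (d + x) (y :: a) by [].
by rewrite e1 e2 -addnA IH.
Qed.

Lemma ps_map c a : ps c a = map (addn c) (ps 0 a).
Proof. by rewrite -ps_mapD addn0. Qed.

Lemma ps_take c a L : ps c (take L.+1 a) = take L (ps c a).
Proof.
elim: a c L => [|x a IH] c L //=.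
case: L => [|L]; first by case: a {IH}.
case: a IH => [|y a] IH //=.
by rewrite -IH.
Qed.

Lemma ps_drop c a r : r < size a ->
  drop r (ps c a) = ps (c + sumn (take r a)) (drop r a).
Proof.
elim: a c r => [|x a IH] c r //=.
case: r => [|r] hr; first by rewrite drop0 take0 /= addn0.
case: a IH hr => [|y a] IH hr //=.
by rewrite IH // addnA.
Qed.

Lemma ps_dec c x D : 0 < x -> ps c (x :: D) = ps c.+1 (x.-1 :: D).
Proof. by move=> hx /=; case: D => // y D; rewrite addSn -addnS prednK. Qed.

Lemma nth_ps' c a L : L < (size a).-1 -> nth 0 (ps c a) L = c + sumn (take L.+1 a).
Proof.
elim: a c L => [|x [|y a] IH] c L //=.
case: L => [|L] hL /=; first by rewrite addn0.
by rewrite IH // addnA.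
Qed.

Open Scope ring_scope.

Definition Fc (a : seq nat) : int := cnt 0 (ps 0 a).
Definition ralpha r (a : seq nat) :=
  if nth 0%N a r == 1%N then drop r.+1 a else (nth 0%N a r).-1 :: drop r.+1 a.

Lemma cnt0_cons0 D : Fc (0%N :: D) = Fc D.
Proof.
rewrite /Fc /=; case: D => // y D.
by rewrite cnt_cons big_nat1.
Qed.

Lemma GL a r : (r < size a)%N -> (0 < nth 0 a r)%N ->
  Fc (ralpha r a) = cnt (sumn (take r a)).+1 (drop r (ps 0 a)).
Proof.
move=> hr hx.
rewrite ps_drop // add0n (drop_nth 0 hr) ps_dec // ps_map.
rewrite -[X in cnt X _]addn0 cnt_shift -/(Fc _).
rewrite /ralpha; case: eqP => [->|//].
by rewrite cnt0_cons0.
Qed.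

Lemma Fc_nil : Fc [::] = 1.
Proof. by []. Qed.

Lemma TR a : (0 < size a)%N -> all (fun x => 0 < x)%N a ->
  Fc a = \sum_(r < size a) Fc (take r a) * Fc (ralpha r a).
Proof.
case: a => [|x a] // _ pa.
have sS : sorted leq (ps 0 (x :: a)) by apply: sorted_ps.
rewrite {1}/Fc (decomp sS (leq0n _)).
rewrite [in RHS]big_ord_recl take0 Fc_nil mul1r.
rewrite size_ps; congr (_ + _).
  rewrite GL //; last by move: pa => /= /andP[].
  by rewrite take0 drop0.
apply: eq_bigr => L _.
have hL : (L.+1 < size (x :: a))%N by rewrite /= ltnS.
have hp : (0 < nth 0 (x :: a) L.+1)%N by apply: (allP pa); apply: mem_nth.
rewrite lift0 (GL hL hp) /Fc -ps_take.
congr (_ * cnt _ _).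
by rewrite nth_ps' ?size_ps.
Qed.

Open Scope nat_scope.
Open Scope nat_scope.

Inductive tree := Leaf | Node of nat & tree & tree.

Fixpoint ins (x : nat) (t : tree) : tree :=
  match t with
  | Leaf => Node x Leaf Leaf
  | Node r L R => if x < r then Node r (ins x L) R else Node r L (ins x R)
  end.

Definition bst (w : seq nat) : tree := foldl (fun t x => ins x t) Leaf w.

Fixpoint sep (a c : nat) (t : tree) : bool :=
  match t with
  | Leaf => false
  | Node r L R => ((a < r) && (r <= c)) || ((c < r) && sep a c L) || ((r <= a) && sep a c R)
  end.

Lemma ins_comm a c t : a < c -> sep a c t -> ins c (ins a t) = ins a (ins c t).
Proof.
move=> hac.
elim: t => [|r L IHL R IHR] //= /orP[/orP[/andP[har hrc]|/andP[hcr hL]]|/andP[hra hR]].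
- by rewrite har ltnNge hrc /= har ltnNge hrc.
- have har : a < r by apply: ltn_trans hac hcr.
  by rewrite har hcr /= hcr har IHL.
- have hrc : r <= c by apply: leq_trans hra (ltnW hac).
  have nar : (a < r) = false by rewrite ltnNge hra.
  have ncr : (c < r) = false by rewrite ltnNge hrc.
  by rewrite nar ncr /= ncr nar IHR.
Qed.

Lemma sep_ins a c x t : sep a c t -> sep a c (ins x t).
Proof.
elim: t => [|r L IHL R IHR] //=.
case: (x < r) => /=.
  by case/orP=> [/orP[->|/andP[-> /IHL ->]]|->]; rewrite ?orbT.
by case/orP=> [/orP[->|->]|/andP[-> /IHR ->]]; rewrite ?orbT.
Qed.

Lemma sep_insb a b c t : a < b <= c -> sep a c (ins b t).
Proof.
case/andP=> hab hbc.
elim: t => [|r L IHL R IHR] /=; first by rewrite hab hbc.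
case: ifP => hbr /=.
  case: (leqP r c) => hrc.
    have har : a < r by lia.
    by rewrite har.
  by rewrite IHL orbT.
have hrc : r <= c by lia.
case: (ltnP a r) => har; first by rewrite hrc.
by rewrite IHR !orbT.
Qed.

Lemma sep_foldl a c t s : sep a c t -> sep a c (foldl (fun t x => ins x t) t s).
Proof. by elim: s t => [|x s IH] t //= h; apply: IH; apply: sep_ins. Qed.

Lemma bst_adj w1 w2 : sylv_adj w1 w2 -> bst w1 = bst w2.
Proof.
case=> u [v [w [a [b [c [/andP[hab hbc] -> ->]]]]]].
rewrite /bst -!cat_cons !foldl_cat /=.
rewrite ins_comm //; first by apply: leq_trans hbc.
apply: sep_foldl; apply: sep_insb; by rewrite hab hbc.
Qed.

Lemma bst_equiv w1 w2 : sylv_equiv w1 w2 -> bst w1 = bst w2.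
Proof.
elim => [x y /bst_adj //|x //|x y _ -> //|x y z _ -> _ -> //].
Qed.

Lemma foldl_node x L R s :
  foldl (fun t y => ins y t) (Node x L R) s =
  Node x (foldl (fun t y => ins y t) L [seq y <- s | y < x])
         (foldl (fun t y => ins y t) R [seq y <- s | ~~ (y < x)]).
Proof.
elim: s L R => [|y s IH] L R //=.
by case: ifP => hy /=; rewrite IH.
Qed.

Lemma bst_split x u v : all (fun y => y < x) u -> all (fun y => x <= y) v ->
  bst (x :: u ++ v) = Node x (bst u) (bst v).
Proof.
move=> hu hv; rewrite /bst /= foldl_node !filter_cat.
have -> : [seq y <- u | y < x] = u by apply/all_filterP.
have -> : [seq y <- v | y < x] = [::].
  by apply/eqP; rewrite -(negbK (_ == _)) -has_filter; apply/hasPn => y /(allP hv); rewrite -leqNgt.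
have -> : [seq y <- u | ~~ (y < x)] = [::].
  by apply/eqP; rewrite -(negbK (_ == _)) -has_filter; apply/hasPn => y /(allP hu) ->.
have -> : [seq y <- v | ~~ (y < x)] = v.
  by apply/all_filterP; apply/allP => y /(allP hv); rewrite -leqNgt.
by rewrite cats0.
Qed.

Fixpoint pre (t : tree) : seq nat :=
  match t with Leaf => [::] | Node x L R => x :: pre L ++ pre R end.

Open Scope nat_scope.
Open Scope nat_scope.

Lemma adj_ctx p q s t : sylv_adj s t -> sylv_adj (p ++ s ++ q) (p ++ t ++ q).
Proof.
case=> u [v [w [a [b [c [h -> ->]]]]]].
exists (p ++ u), v, (w ++ q), a, b, c; split => //.
  by rewrite !catA -!catA /= -!catA.
by rewrite !catA -!catA /= -!catA.
Qed.

Lemma equiv_ctx p q s t : sylv_equiv s t -> sylv_equiv (p ++ s ++ q) (p ++ t ++ q).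
Proof.
elim=> [x y h|x|x y _ IH|x y z _ IH1 _ IH2].
- by apply: rst_step; apply: adj_ctx.
- exact: rst_refl.
- exact: rst_sym.
- exact: rst_trans IH2.
Qed.

Lemma sy_refl s : sylv_equiv s s.
Proof. exact: rst_refl. Qed.

Lemma sy_sym s t : sylv_equiv s t -> sylv_equiv t s.
Proof. exact: rst_sym. Qed.

Lemma sy_trans s t u : sylv_equiv s t -> sylv_equiv t u -> sylv_equiv s u.
Proof. exact: rst_trans. Qed.

Lemma bubble x y l h s : y < x -> all (fun z => x <= z) h ->
  sylv_equiv (x :: l ++ h ++ y :: s) (x :: l ++ y :: h ++ s).
Proof.
move=> hyx; elim/last_ind: h s => [|h c IH] s hh; first exact: sy_refl.
move: hh; rewrite all_rcons => /andP[hc hh].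
apply: (@sy_trans _ (x :: l ++ h ++ y :: c :: s)).
  apply: sy_sym; apply: rst_step.
  exists [::], (l ++ h), s, y, x, c; split.
  - by rewrite hyx hc.
  - by rewrite /= -catA.
  - by rewrite /= -catA cat_rcons.
by rewrite cat_rcons; apply: IH.
Qed.

Lemma sortw x l h s : all (fun z => z < x) l -> all (fun z => x <= z) h ->
  sylv_equiv (x :: l ++ h ++ s)
             (x :: (l ++ [seq z <- s | z < x]) ++ (h ++ [seq z <- s | x <= z])).
Proof.
elim: s l h => [|y s IH] l h hl hh /=; first by rewrite !cats0; apply: sy_refl.
case: (ltnP y x) => hyx /=.
  apply: sy_trans (@bubble x y l h s hyx hh) _.
  have := IH (rcons l y) h; rewrite all_rcons hyx hl => /(_ isT hh).
  by rewrite -cats1 -!catA /=.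
have := IH l (rcons h y) hl; rewrite all_rcons hyx hh => /(_ isT).
by rewrite -cats1 -!catA /=.
Qed.

Lemma sort_root x s :
  sylv_equiv (x :: s) (x :: [seq z <- s | z < x] ++ [seq z <- s | x <= z]).
Proof. exact: (@sortw x [::] [::] s isT isT). Qed.

Open Scope nat_scope.
Open Scope nat_scope.

Definition ridx r (idx a : seq nat) :=
  if nth 0 a r == 1 then drop r.+1 idx else drop r idx.

Fixpoint reps (n : nat) (idx a : seq nat) : seq (seq nat) :=
  match n with
  | 0 => [:: [::]]
  | n'.+1 =>
    if a is [::] then [:: [::]] else
    flatten [seq [seq nth 0 idx r :: u ++ v | u <- reps n' (take r idx) (take r a),
                                             v <- reps n' (ridx r idx a) (ralpha r a)]
            | r <- iota 0 (size a)]
  end.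

Definition Good (idx a : seq nat) :=
  [/\ size idx = size a, sorted ltn idx & all (fun x => 0 < x) a].

Lemma good_take idx a r : Good idx a -> Good (take r idx) (take r a).
Proof.
case=> hs hso hp; split.
- by rewrite !size_take hs.
- exact: take_sorted.
- by apply/allP => y /mem_take /(allP hp).
Qed.

Lemma good_right idx a r : Good idx a -> r < size a -> Good (ridx r idx a) (ralpha r a).
Proof.
case=> hs hso hp hr; rewrite /ridx /ralpha; case: eqP => h1; split.
- by rewrite !size_drop hs.
- exact: drop_sorted.
- by apply/allP => y /mem_drop /(allP hp).
- by rewrite /= !size_drop hs; lia.
- exact: drop_sorted.
- rewrite /= ; apply/andP; split.
    have : 0 < nth 0 a r by apply: (allP hp); apply: mem_nth.
    by case: (nth 0 a r) h1 => [|[|k]].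
  by apply/allP => y /mem_drop /(allP hp).
Qed.

Lemma sumn_split a r : r < size a ->
  sumn a = sumn (take r a) + nth 0 a r + sumn (drop r.+1 a).
Proof.
move=> hr; rewrite -{1}(cat_take_drop r a) sumn_cat (drop_nth 0 hr) /=.
by rewrite addnA.
Qed.

Lemma sumn_right a r : r < size a -> 0 < nth 0 a r ->
  sumn (ralpha r a) = (nth 0 a r).-1 + sumn (drop r.+1 a).
Proof.
move=> hr hp; rewrite /ralpha; case: eqP => [->|] //=.
Qed.

Lemma cw_cons i I x a : content_word (i :: I) (x :: a) = nseq x i ++ content_word I a.
Proof. by []. Qed.

Lemma cw_nil I : content_word I [::] = [::].
Proof. by case: I. Qed.

Lemma cw_split idx a r : size idx = size a -> r < size a ->
  content_word idx a = content_word (take r idx) (take r a) ++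
     nseq (nth 0 a r) (nth 0 idx r) ++ content_word (drop r.+1 idx) (drop r.+1 a).
Proof.
elim: r idx a => [|r IH] [|i I] [|x a] //= hs hr.
  by rewrite !drop0.
rewrite !cw_cons IH; [by rewrite catA|by case: hs|by []].
Qed.

Lemma cw_right idx a r : size idx = size a -> r < size a -> 0 < nth 0 a r ->
  nseq (nth 0 a r) (nth 0 idx r) ++ content_word (drop r.+1 idx) (drop r.+1 a) =
  nth 0 idx r :: content_word (ridx r idx a) (ralpha r a).
Proof.
move=> hs hr hp; rewrite /ridx /ralpha; case: eqP => [->|h1] //.
rewrite (drop_nth 0 (_ : r < size idx)) ?hs // cw_cons.
by case: (nth 0 a r) hp h1 => [|[|k]].
Qed.

Lemma mem_cw y I a : y \in content_word I a -> y \in I.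
Proof.
elim: I a => [|i I IH] [|x a] //=.
rewrite cw_cons mem_cat in_cons => /orP[/nseqP[-> _]|/IH ->]; by rewrite ?eqxx ?orbT.
Qed.

Lemma idx_take idx r y : sorted ltn idx -> r < size idx ->
  y \in take r idx -> y < nth 0 idx r.
Proof.
move=> so hr; rewrite (sorted_pairwise ltn_trans) in so.
move: so; rewrite -{1}(cat_take_drop r idx) (drop_nth 0 hr) pairwise_cat => /andP[h _].
by move=> hy; move: (allrelP h y (nth 0 idx r) hy); rewrite mem_head; apply.
Qed.

Lemma idx_ridx idx a r y : sorted ltn idx -> r < size idx ->
  y \in ridx r idx a -> nth 0 idx r <= y.
Proof.
move=> so hr; rewrite (sorted_pairwise ltn_trans) in so.
move: so; rewrite -{1}(cat_take_drop r idx) (drop_nth 0 hr) pairwise_cat pairwise_cons.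
case/and3P=> _ _ /andP[hall _].
rewrite /ridx; case: eqP => _ hy.
  by apply: ltnW; apply: (allP hall).
move: hy; rewrite (drop_nth 0 hr) in_cons => /orP[/eqP -> //|hy].
by apply: ltnW; apply: (allP hall).
Qed.

Open Scope nat_scope.
Open Scope nat_scope.

Lemma reps_nil n idx : reps n idx [::] = [:: [::]].
Proof. by case: n. Qed.

Lemma memRP n idx x a w :
  reflect (exists r u v, [/\ r < size (x :: a), u \in reps n (take r idx) (take r (x :: a)),
             v \in reps n (ridx r idx (x :: a)) (ralpha r (x :: a)) &
             w = nth 0 idx r :: u ++ v])
          (w \in reps n.+1 idx (x :: a)).
Proof.
apply: (iffP flatten_mapP).
  case=> r; rewrite mem_iota add0n => /andP[_ hr] /allpairsP[[u v] /= [hu hv ->]].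
  by exists r, u, v.
case=> r [u [v [hr hu hv ->]]]; exists r; first by rewrite mem_iota.
by apply/allpairsP; exists (u, v).
Qed.

Lemma sum_pos a : all (fun x => 0 < x) a -> a != [::] -> 0 < sumn a.
Proof. by case: a => [|x a] //= /andP[hx _] _; apply: leq_trans hx (leq_addr _ _). Qed.

Lemma uniq_flat (T : eqType) (s : seq nat) (F : nat -> seq T) :
  uniq s -> (forall r, r \in s -> uniq (F r)) ->
  (forall r1 r2 w, r1 \in s -> r2 \in s -> w \in F r1 -> w \in F r2 -> r1 = r2) ->
  uniq (flatten [seq F r | r <- s]).
Proof.
elim: s => [|r s IH] //= /andP[nr us] hu hd.
rewrite cat_uniq hu ?mem_head //= IH //; last first.
- by move=> r1 r2 w h1 h2; apply: hd; rewrite in_cons ?h1 ?h2 orbT.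
- by move=> r1 h1; apply: hu; rewrite in_cons h1 orbT.
rewrite andbT; apply/hasPn => w /flatten_mapP[r' hr' hw]; apply/negP => hw'.
have err := hd r r' w (mem_head _ _) _ hw' hw.
by move: nr; rewrite err ?hr' // in_cons hr' orbT.
Qed.

Lemma nth_inj idx r1 r2 : sorted ltn idx -> r1 < size idx -> r2 < size idx ->
  nth 0 idx r1 = nth 0 idx r2 -> r1 = r2.
Proof.
move=> so h1 h2 e.
case: (ltngtP r1 r2) => // h.
  have := sorted_ltn_nth ltn_trans 0 so r1 r2 h1 h2 h; rewrite e ltnn //.
have := sorted_ltn_nth ltn_trans 0 so r2 r1 h2 h1 h; rewrite e ltnn //.
Qed.

Lemma reps_cons n idx x a : reps n.+1 idx (x :: a) =
  flatten [seq [seq nth 0 idx r :: u ++ v | u <- reps n (take r idx) (take r (x :: a)),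
                                           v <- reps n (ridx r idx (x :: a)) (ralpha r (x :: a))]
          | r <- iota 0 (size (x :: a))].
Proof. by []. Qed.

Lemma sub_facts n idx a r : Good idx a -> sumn a <= n.+1 -> r < size a ->
  [/\ Good (take r idx) (take r a), sumn (take r a) <= n,
      Good (ridx r idx a) (ralpha r a), sumn (ralpha r a) <= n & 0 < nth 0 a r].
Proof.
move=> ga hs hr; have [hsz so hp] := ga.
have hpos : 0 < nth 0 a r by apply: (allP hp); apply: mem_nth.
have := sumn_split hr; have := sumn_right hr hpos => e1 e2.
split => //; [exact: good_take | lia | exact: good_right | lia].
Qed.

Lemma reps_props n : forall idx a, Good idx a -> sumn a <= n ->
  [/\ (forall w, w \in reps n idx a -> perm_eq w (content_word idx a)),
      (forall w, w \in reps n idx a -> pre (bst w) = w),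
      uniq (reps n idx a) &
      Posz (size (reps n idx a)) = Fc a].
Proof.
elim: n => [|n IH] idx a ga hsum.
  case: a ga hsum => [|x a] ga hsum.
    rewrite reps_nil cw_nil; split => // w; by rewrite inE => /eqP ->.
  have [_ _ hp] := ga; have := sum_pos hp isT; lia.
case: a ga hsum => [|x a] ga hsum.
  rewrite reps_nil cw_nil; split => // w; by rewrite inE => /eqP ->.
have [hsz so hp] := ga.
split.
- move=> w /memRP [r [u [v [hr hu hv ->]]]].
  have [gl sl gr sr hpos] := sub_facts ga hsum hr.
  have [P1 _ _ _] := IH _ _ gl sl; have [P1' _ _ _] := IH _ _ gr sr.
  rewrite (cw_split hsz hr) (cw_right hsz hr hpos).
  rewrite -cat1s (perm_catCA [:: nth 0 idx r] u v).
  by apply: perm_cat; [apply: P1 | rewrite /= perm_cons; apply: P1'].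
- move=> w /memRP [r [u [v [hr hu hv ->]]]].
  have [gl sl gr sr hpos] := sub_facts ga hsum hr.
  have [P1 P2 _ _] := IH _ _ gl sl; have [P1' P2' _ _] := IH _ _ gr sr.
  have hri : r < size idx by rewrite hsz.
  rewrite bst_split /=; first by rewrite (P2 _ hu) (P2' _ hv).
    apply/allP => y hy; apply: (idx_take so hri).
    by apply: (@mem_cw _ _ (take r (x :: a))); rewrite -(perm_mem (P1 _ hu)).
  apply/allP => y hy; apply: (@idx_ridx idx (x :: a) r y so hri).
  by apply: (@mem_cw _ _ (ralpha r (x :: a))); rewrite -(perm_mem (P1' _ hv)).
- rewrite reps_cons; apply: uniq_flat; first exact: iota_uniq.
    move=> r; rewrite mem_iota add0n => /andP[_ hr].
    have [gl sl gr sr hpos] := sub_facts ga hsum hr.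
    have [P1 _ U1 _] := IH _ _ gl sl; have [P1' _ U1' _] := IH _ _ gr sr.
    apply: allpairs_uniq => // -[u1 v1] [u2 v2].
    move=> /allpairsP[[u1' v1'] [/= hu1 _ [-> ->]]] /allpairsP[[u2' v2'] [/= hu2 _ [-> ->]]] /= [e].
    have es : size u1' = size u2' by rewrite (perm_size (P1 _ hu1)) (perm_size (P1 _ hu2)).
    have e1 : u1' = u2' by rewrite -(take_size_cat v1' es) e take_size_cat.
    have e2 : v1' = v2' by rewrite -(drop_size_cat v1' es) e drop_size_cat.
    by rewrite e1 e2.
  move=> r1 r2 w; rewrite !mem_iota !add0n => /andP[_ h1] /andP[_ h2].
  move=> /allpairsP[[u1 v1] [_ _ ->]] /allpairsP[[u2 v2] [_ _ /=]] [e _].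
  by apply: (nth_inj so); rewrite ?hsz.
rewrite reps_cons size_flatten /shape -map_comp (TR (isT : 0 < size (x :: a)) hp).
rewrite sumnE big_map PoszS.
rewrite -(big_mkord xpredT (fun r => (Fc (take r (x :: a)) * Fc (ralpha r (x :: a)))%R)).
rewrite /index_iota subn0; apply: eq_big_seq => r; rewrite mem_iota add0n => /andP[_ hr].
have [gl sl gr sr hpos] := sub_facts ga hsum hr.
have [_ _ _ S1] := IH _ _ gl sl; have [_ _ _ S1'] := IH _ _ gr sr.
by rewrite /= size_allpairs PoszM S1 S1'.
Qed.

Lemma mem_cw_idx y I a : size I = size a -> y \in content_word I a ->
  exists2 r, r < size a & y = nth 0 I r.
Proof.
elim: I a => [|i I IH] [|x a] //= hs.
rewrite cw_cons mem_cat => /orP[/nseqP[-> _]|hy]; first by exists 0.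
have [r hr ->] := IH a (congr1 predn hs) hy.
by exists r.+1.
Qed.

Lemma reps_cover n : forall idx a, Good idx a -> sumn a <= n ->
  forall w, perm_eq w (content_word idx a) ->
  exists2 r, r \in reps n idx a & sylv_equiv w r.
Proof.
elim: n => [|n IH] idx a ga hsum w pw.
  case: a ga hsum pw => [|x a] ga hsum pw.
    move: pw; rewrite cw_nil => /perm_size /size0nil ->.
    exists [::]; first by []. exact: sy_refl.
  have [_ _ hp] := ga; have := sum_pos hp isT; lia.
case: a ga hsum pw => [|x a] ga hsum pw.
  move: pw; rewrite cw_nil => /perm_size /size0nil ->.
  exists [::]; first by rewrite reps_nil. by apply: sy_refl.
have [hsz so hp] := ga.
case: w pw => [|y w'] pw.
  have hx : 0 < x by move: hp => /= /andP[].
  have := perm_size pw; rewrite (cw_split hsz (isT : 0 < size (x :: a))) !size_cat size_nseq /=.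
  lia.
have : y \in content_word idx (x :: a) by rewrite -(perm_mem pw) mem_head.
move=> /(mem_cw_idx hsz) [r hr ey].
have [gl sl gr sr hpos] := sub_facts ga hsum hr.
have hri : r < size idx by rewrite hsz.
have ec : content_word idx (x :: a) =
    content_word (take r idx) (take r (x :: a)) ++ y :: content_word (ridx r idx (x :: a)) (ralpha r (x :: a)).
  by rewrite (cw_split hsz hr) (cw_right hsz hr hpos) ey.
set C1 := content_word (take r idx) (take r (x :: a)) in ec *.
set C2 := content_word (ridx r idx (x :: a)) (ralpha r (x :: a)) in ec *.
have hC1 : all (fun z => z < y) C1.
  by apply/allP => z hz; rewrite ey; apply: (idx_take so hri); apply: (@mem_cw _ _ (take r (x :: a))).
have hC2 : all (fun z => y <= z) C2.
  by apply/allP => z hz; rewrite ey; apply: (@idx_ridx idx (x :: a) r z so hri); apply: (@mem_cw _ _ (ralpha r (x :: a))).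
have pl : perm_eq [seq z <- w' | z < y] C1.
  have := perm_filter (fun z => z < y) pw; rewrite ec filter_cat /= ltnn.
  have -> : [seq z <- C1 | z < y] = C1 by apply/all_filterP.
  have -> : [seq z <- C2 | z < y] = [::].
    by apply/eqP; rewrite -(negbK (_ == _)) -has_filter; apply/hasPn => z /(allP hC2); rewrite -leqNgt.
  by rewrite cats0.
have pg : perm_eq [seq z <- w' | y <= z] C2.
  have := perm_filter (fun z => y <= z) pw; rewrite ec filter_cat /= leqnn.
  have -> : [seq z <- C2 | y <= z] = C2 by apply/all_filterP.
  have -> : [seq z <- C1 | y <= z] = [::].
    by apply/eqP; rewrite -(negbK (_ == _)) -has_filter; apply/hasPn => z /(allP hC1); rewrite -ltnNge.
  by rewrite perm_cons.
have [u hu eu] := IH _ _ gl sl _ pl.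
have [v hv ev] := IH _ _ gr sr _ pg.
exists (y :: u ++ v).
  by apply/memRP; exists r, u, v; split => //; rewrite ey.
apply: sy_trans (sort_root y w') _.
apply: (@sy_trans _ (y :: u ++ [seq z <- w' | y <= z])).
  exact: (@equiv_ctx [:: y] _ _ _ eu).
have := @equiv_ctx (y :: u) [::] _ _ ev; rewrite !cats0; apply.
Qed.


Unset Implicit Arguments.
Open Scope nat_scope.

Theorem corollary4p12 (alpha idx : seq nat) :
  (0 < size alpha)%N ->
  all (fun a => 0 < a)%N alpha ->
  size idx = size alpha ->
  sorted ltn idx ->
  all (fun x => 0 < x)%N idx ->
  exists N : nat,
    num_classes (fun w => perm_eq w (content_word idx alpha)) N /\
    (N%:Z = \det (cor_matrix alpha))%R.
Proof.
move=> ha pa hs so _.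
have ga : Good idx alpha by split.
have [P1 P2 U Sz] := reps_props ga (leqnn (sumn alpha)).
set R := reps (sumn alpha) idx alpha in P1 P2 U Sz *.
exists (size R); split; last by rewrite Sz det_cor.
exists R; split => //.
- move=> i j hi hj nij E.
  have e := bst_equiv E.
  have : nth [::] R i = nth [::] R j.
    by rewrite -(P2 _ (mem_nth _ hi)) e (P2 _ (mem_nth _ hj)).
  by move/eqP; rewrite nth_uniq // => /eqP.
- move=> w pw; exact: (reps_cover ga (leqnn _) pw).
Qed.
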